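(* For $n\in\mathbb N$, $$\Phi^*_n(1)=\begin{cases}0 & n=1,\\ p^e & n=p^e \text{ with } p \text{ prime},\ e\ge1,\\ 1&\text{otherwise}.\end{cases}$$ Equivalently, $\Phi^*_n(1)=e^{\Lambda^*(n)}$ for all $n>1$.
   Context: $d\mid\mid n$ means $d\mid n$ and $\gcd(d,n/d)=1$; $(j,n)_*=\max\{d: d\mid j,\ d\mid\mid n\}$; $\Phi^*_n(x)=\prod_{1\le j\le n,\ (j,n)_*=1}(x-e^{2\pi i j/n})$. The unitary von Mangoldt function is $\Lambda^*(n)=a\log p$ if $n=p^a$ is a prime power with $a\ge1$, and $\Lambda^*(n)=0$ otherwise. *)

(* Defs.v *)
From HB Require Import structures.
From mathcomp Require Import all_boot all_order all_algebra all_field.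
Set Implicit Arguments. Unset Strict Implicit. Unset Printing Implicit Defensive.
Import Order.TTheory GRing.Theory Num.Theory.

Definition udvd (d n : nat) : bool := (d %| n) && coprime d (n %/ d).

(* (j,n)_* = max { d : d | j, d || n }  (d ranges over 0..n; for n >= 1, d = 1
   always qualifies and every unitary divisor of n is <= n) *)
Definition ugcd (j n : nat) : nat :=
  \max_(d < n.+1 | (d %| j) && udvd d n) d.

Local Open Scope ring_scope.

(* e^{2 pi i / n} in algC: n.-root (-1) is the n-th root of -1 with minimal
   nonnegative argument, i.e. e^{i pi / n}; its square is e^{2 pi i / n}. *)
Definition zeta (n : nat) : algC := (n.-root (-1)) ^+ 2.

Definition uPhi (n : nat) : {poly algC} :=
  \prod_(1 <= j < n.+1 | ugcd j n == 1%N) ('X - (zeta n ^+ j)%:P).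

(* Main.v *)
Require Import Defs.
From HB Require Import structures.
From mathcomp Require Import all_boot all_order all_algebra all_field.
From mathcomp Require Import ring zify.
Import Order.TTheory GRing.Theory Num.Theory.

Definition QP n j := forall r, prime r -> (r %| n)%N -> ~~ (r ^ logn r n %| j)%N.

Lemma ugcd_ge1 n j : (0 < n)%N -> (1 <= ugcd j n)%N.
Proof.
move=> n0; rewrite /ugcd.
have h1 : (1 < n.+1)%N by [].
apply: (leq_trans _ (@leq_bigmax_cond _ (fun d : 'I_n.+1 => (d %| j) && udvd d n)
   (fun d : 'I_n.+1 => nat_of_ord d) (Ordinal h1) _)) => //=.
by rewrite dvd1n /udvd dvd1n coprime1n.
Qed.

Lemma ugcdP n j : (0 < n)%N -> reflect (QP n j) (ugcd j n == 1%N).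
Proof.
move=> n0; apply: (iffP idP).
  move=> /eqP u1 r pr rn; apply/negP => hd.
  set e := logn r n in hd.
  have e0 : (0 < e)%N by rewrite logn_gt0 mem_primes pr n0 rn.
  have dn : (r ^ e %| n)%N by apply: pfactor_dvdnn.
  have lt : (r ^ e < n.+1)%N by rewrite ltnS; apply: dvdn_leq.
  have cop : coprime (r ^ e) (n %/ r ^ e).
    apply: coprimeXl; rewrite prime_coprime //; apply/negP => h.
    have : (r ^ e.+1 %| n)%N.
      have : (r ^ e * r %| r ^ e * (n %/ r ^ e))%N.
        by rewrite dvdn_pmul2l // expn_gt0 prime_gt0.
      by rewrite [X in (_ %| X)%N]mulnC (divnK dn) -expnSr.
    by rewrite pfactor_dvdn // ltnn.
  have := @leq_bigmax_cond _ (fun d : 'I_n.+1 => (d %| j) && udvd d n)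
     (fun d : 'I_n.+1 => nat_of_ord d) (Ordinal lt).
  rewrite /= hd /udvd dn cop => /(_ isT).
  rewrite -/(ugcd j n) u1.
  have : (r <= r ^ e)%N.
    by rewrite -{1}(expn1 r); apply: leq_pexp2l (prime_gt0 pr) e0.
  by move=> a b; move: (leq_trans (prime_gt1 pr) (leq_trans a b)).
move=> H; rewrite eqn_leq ugcd_ge1 // andbT.
apply/bigmax_leqP => d /andP[dj /andP[dn cop]].
rewrite leqNgt; apply/negP => d1.
have pr := pdiv_prime d1.
set r := pdiv d in pr.
have rd : (r %| d)%N by apply: pdiv_dvd.
have rn : (r %| n)%N by apply: dvdn_trans rd dn.
have := H r pr rn; apply/negP/negPn.
have d0 : (0 < d)%N by apply: ltnW.
have nd0 : (0 < n %/ d)%N by rewrite divn_gt0 // dvdn_leq.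
have -> : logn r n = logn r d.
  move: (nat_of_ord d) d0 nd0 rd dn cop => dd d0 nd0 rd dn cop.
  rewrite -(divnK dn) mulnC lognM // (@logn_coprime r (n %/ dd)) ?addn0 //.
  exact: coprime_dvdl rd cop.
exact: dvdn_trans (pfactor_dvdnn _ _) dj.
Qed.

Lemma ugcd_split p a m j : prime p -> (0 < a)%N -> ~~ (p %| m)%N -> (0 < m)%N ->
  (ugcd j (p ^ a * m) == 1%N) = ~~ (p ^ a %| j)%N && (ugcd j m == 1%N).
Proof.
move=> pp a0 pm m0.
have q0 : (0 < p ^ a)%N by rewrite expn_gt0 prime_gt0.
have n0 : (0 < p ^ a * m)%N by rewrite muln_gt0 q0.
have lp : logn p (p ^ a * m) = a.
  by rewrite lognM // pfactorK // logn_coprime ?addn0 // prime_coprime.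
have lr : forall r, prime r -> (r %| m)%N -> logn r (p ^ a * m) = logn r m.
  move=> r pr rm; rewrite lognM // logn_coprime //.
  rewrite prime_coprime // Euclid_dvdX // a0 andbT dvdn_prime2 //.
  by apply/eqP => e; move: pm; rewrite -e rm.
apply/(ugcdP _ _ n0)/andP.
  move=> H; split.
    by have := H p pp; rewrite lp; apply; apply: dvdn_mulr; apply: dvdn_exp.
  apply/(ugcdP _ _ m0) => r pr rm.
  by rewrite -lr //; apply: H => //; apply: dvdn_mull.
move=> [nq /(ugcdP _ _ m0) Hm] r pr; rewrite Euclid_dvdM // => /orP[].
    rewrite Euclid_dvdX // a0 andbT dvdn_prime2 // => /eqP ->.
    by rewrite lp.
  by move=> rm; rewrite lr //; apply: Hm.
Qed.

Lemma ugcd_mod m j : (0 < m)%N -> (ugcd j m == 1%N) = (ugcd (j %% m) m == 1%N).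
Proof.
move=> m0; apply/(ugcdP _ _ m0)/(ugcdP _ _ m0) => H r pr rm.
  have := H r pr rm; apply: contra => h.
  by rewrite (divn_eq j m) dvdn_addr // dvdn_mull // pfactor_dvdnn.
have := H r pr rm; apply: contra => h.
by rewrite -(dvdn_addr _ (dvdn_mull (j %/ m) (pfactor_dvdnn r m))) -divn_eq.
Qed.

Lemma ugcd_mulq p a m t : prime p -> ~~ (p %| m)%N -> (0 < m)%N ->
  (ugcd (p ^ a * t) m == 1%N) = (ugcd t m == 1%N).
Proof.
move=> pp pm m0.
have cop : forall r, prime r -> (r %| m)%N -> coprime (r ^ logn r m) (p ^ a).
  move=> r pr rm; apply: coprimeXl; apply: coprimeXr.
  rewrite prime_coprime // dvdn_prime2 //; apply/eqP => e; move: pm; rewrite -e rm //.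
apply/(ugcdP _ _ m0)/(ugcdP _ _ m0) => H r pr rm.
  by have := H r pr rm; rewrite Gauss_dvdr // cop.
by rewrite Gauss_dvdr ?cop //; apply: H.
Qed.

Lemma ugcd_div m j : (1 < m)%N -> (m %| j)%N -> (ugcd j m == 1%N) = false.
Proof.
move=> m1 mj; apply/negP => /(ugcdP _ _ (ltnW m1)) H.
have pr := pdiv_prime m1.
have := H _ pr (pdiv_dvd m).
by rewrite (dvdn_trans (pfactor_dvdnn _ _) mj).
Qed.

Lemma ugcd_1 j : (ugcd j 1 == 1%N).
Proof.
apply/(ugcdP _ _ (isT : (0 < 1)%N)) => r pr r1.
by move: r1; rewrite dvdn1 => /eqP e; move: pr; rewrite e.
Qed.

Local Open Scope ring_scope.

Fixpoint cheb {R : nzRingType} (k : nat) : {poly R} :=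
  match k with
  | 0 => 1
  | S k1 => match k1 with
            | 0 => 'X
            | S k2 => 'X *+ 2 * cheb k1 - cheb k2
            end
  end.

Lemma chebSS {R : nzRingType} k : @cheb R k.+2 = 'X *+ 2 * cheb k.+1 - cheb k.
Proof. by []. Qed.

Lemma cheb_map k : map_poly algRval (@cheb algR k) = @cheb algC k.
Proof.
have H : forall j, map_poly algRval (@cheb algR j) = @cheb algC j /\
                   map_poly algRval (@cheb algR j.+1) = @cheb algC j.+1.
  elim=> [|j [IH1 IH2]]; first by rewrite /= rmorph1 map_polyX.
  split=> //; rewrite chebSS rmorphB rmorphM rmorphMn /= map_polyX IH1 IH2.
  by [].
by case: (H k).
Qed.

Lemma unitC_Re_step (y : algC) k : `|y| = 1 ->
  'Re (y ^+ k.+2) = 2 * 'Re y * 'Re (y ^+ k.+1) - 'Re (y ^+ k).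
Proof.
move=> ny.
have yy : y * y^* = 1 by rewrite -normCK ny expr1n.
have Hk : y ^+ k = y ^+ k.+1 * y^*.
  by rewrite exprSr -mulrA yy mulr1.
rewrite Hk exprSr ReM ReM Re_conj Im_conj.
rewrite mulr2n mulrDl; ring.
Qed.

Lemma cheb_Re (y : algC) k : `|y| = 1 -> (cheb k).['Re y] = 'Re (y ^+ k).
Proof.
move=> ny.
have H : forall j, (cheb j).['Re y] = 'Re (y ^+ j) /\ (cheb j.+1).['Re y] = 'Re (y ^+ j.+1).
  elim=> [|j [IH1 IH2]].
    by rewrite /= hornerC hornerX expr0 expr1 (Creal_ReP _ (rpred1 _)).
  split; first exact: IH2.
  rewrite chebSS hornerD hornerN hornerM hornerMn hornerX IH1 IH2.
  by rewrite unitC_Re_step // mulr_natl mulrnAl.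
by case: (H k).
Qed.

Lemma unitC_Re_eq {y1 y2 : algC} : `|y1| = 1 -> `|y2| = 1 -> 'Re y1 = 'Re y2 ->
  y1 = y2 \/ y1 = y2^*.
Proof.
move=> n1 n2 eR.
have : 'Im y1 ^+ 2 = 'Im y2 ^+ 2.
  have h1 := normC2_Re_Im y1; have h2 := normC2_Re_Im y2.
  rewrite n1 in h1; rewrite n2 in h2; rewrite eR in h1.
  by apply: (addrI ('Re y2 ^+ 2)); rewrite -h1 -h2.
move/eqP; rewrite eqf_sqr => /orP[/eqP eI | /eqP eI].
  by left; apply/eqCP.
by right; apply/eqCP; rewrite Re_conj Im_conj.
Qed.

Lemma Re_le1 {y : algC} : `|y| = 1 -> -1 <= 'Re y <= 1.
Proof.
move=> ny; apply/andP; split.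
  have := (leif_Re_Creal (- y)).1; rewrite normrN ny raddfN /=.
  by rewrite lerNl.
by have := (leif_Re_Creal y).1; rewrite ny.
Qed.

Lemma norm_root1 (y : algC) k : (0 < k)%N -> `|y| ^+ k = 1 -> `|y| = 1.
Proof. by move=> k0 h; apply/eqP; rewrite -(pexpr_eq1 k0) ?normr_ge0 // h. Qed.

Lemma contra_step (n m p : nat) (w : algC) :
  (0 < n)%N -> n = (m * p)%N -> prime p -> odd p ->
  w = n.-root (-1) -> w ^+ m = -1 -> False.
Proof.
move=> n0 nmp pp op wE wm.
have wn : w ^+ n = -1 by rewrite wE rootCK.
have nw : `|w| = 1.
  by apply: (@norm_root1 w n n0); rewrite -normrX wn normrN normr1.
have p1 : (1 < p)%N by apply: prime_gt1.
have [eps peps] := C_prim_root_exists (ltnW p1).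
set y0 := - eps.
have y0p : y0 ^+ p = -1.
  by rewrite /y0 exprNn (prim_expr_order peps) mulr1 -signr_odd op.
have ny0 : `|y0| = 1.
  apply: (@norm_root1 y0 p (ltnW p1)); rewrite -normrX y0p normrN normr1 //.
have y0N1 : y0 != -1.
  rewrite /y0 eqr_opp; apply/eqP => e1.
  have := prim_order_dvd peps 1; rewrite expr1 e1 eqxx dvdn1 => /eqP e.
  by rewrite e in p1.
have t0gt : -1 < 'Re y0.
  have /andP[h _] := Re_le1 ny0; rewrite lt_neqAle h andbT.
  apply/eqP => e; move: y0N1.
  have eR : 'Re y0 = 'Re (-1 : algC) by rewrite -e (Creal_ReP _ (rpredN1 _)).
  have [e2|e2] := unitC_Re_eq ny0 (normrN1 _) eR.
  - by rewrite e2 eqxx.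
  - by rewrite e2 conjCN1 eqxx.
have m0 : (0 < m)%N by move: n0; rewrite nmp muln_gt0 => /andP[].
pose a := in_algR (Creal_Re w).
pose t0 := in_algR (Creal_Re y0).
pose P := @cheb algR m - t0%:P.
have PE : forall x : algR, val P.[x] = (cheb m).[val x] - val t0.
  move=> x; rewrite -horner_map /P rmorphB /= cheb_map map_polyC /=.
  by rewrite hornerD hornerN hornerC.
have [la1 _] : (val a <= 1) /\ True by have /andP[_ h] := Re_le1 nw.
have [x /andP[ax x1] rx] : exists2 x : algR, a <= x <= 1 & root P x.
  apply: poly_ivt; first exact: la1.
  apply/andP; split.
    rewrite -[_ <= 0]/(val P.[a] <= 0) PE /= cheb_Re // wm.
    rewrite (Creal_ReP _ (rpredN1 _)) subr_le0; exact: ltW.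
  rewrite -[0 <= _]/(0 <= val P.[1]) PE /=.
  have := @cheb_Re 1 m (normr1 algC); rewrite (Creal_ReP _ (rpred1 _)) expr1n.
  move=> ->; rewrite (Creal_ReP _ (rpred1 _)) subr_ge0.
  by have /andP[_ h] := Re_le1 ny0.
have hx : (cheb m).[val x] = 'Re y0.
  have := congr1 val (eqP rx); rewrite PE /= => /eqP.
  by rewrite subr_eq0 => /eqP.
set X := val x in hx ax x1.
have Xr : X \is Num.real by exact: algRvalP.
have axC : 'Re w <= X := ax.
have aX : 'Re w < X.
  rewrite lt_neqAle axC andbT; apply/eqP => e.
  move: hx; rewrite -e cheb_Re // wm (Creal_ReP _ (rpredN1 _)) => e2.
  by move: t0gt; rewrite -e2 ltxx.
have Xm1 : -1 <= X by apply: le_trans axC; have /andP[h _] := Re_le1 nw.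
have s0 : 0 <= 1 - X ^+ 2.
  rewrite -[1 - X ^+ 2]/(1 - X * X) -[1 - X * X]/(1 - X * X).
  have -> : 1 - X * X = (1 - X) * (1 + X) by ring.
  apply: mulr_ge0; first by rewrite subr_ge0.
  by rewrite -lerBlDl sub0r.
set s := sqrtC (1 - X ^+ 2).
have sge0 : 0 <= s by rewrite sqrtC_ge0.
have sr : s \is Num.real by exact: ger0_real.
set y := X + 'i * s.
have ReY : 'Re y = X by rewrite Re_rect.
have ImY : 'Im y = s by rewrite Im_rect.
have ny : `|y| = 1.
  apply: (@norm_root1 y 2 (isT : (0 < 2)%N)).
  by rewrite normC2_Re_Im ReY ImY sqrtCK addrC subrK.
have nym : `|y ^+ m| = 1 by rewrite normrX ny expr1n.
have eRe : 'Re (y ^+ m) = 'Re y0 by rewrite -cheb_Re // ReY.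
have yn : y ^+ n = -1.
  rewrite nmp exprM.
  have [->|->] := unitC_Re_eq nym ny0 eRe; first exact: y0p.
  by rewrite -rmorphXn /= y0p conjCN1.
have := rootC_Re_max n0 yn; rewrite ImY sge0 ReY -wE => /(_ isT) h.
by move: (lt_le_trans aX h); rewrite ltxx.
Qed.

Lemma rootN1_prim n : (0 < n)%N -> (2 * n).-primitive_root (n.-root (-1 : algC)).
Proof.
move=> n0; set w := n.-root (-1).
have wn : w ^+ n = -1 by rewrite /w rootCK.
have w2n : w ^+ (2 * n) = 1 by rewrite mulnC exprM wn expr2 mulrNN mulr1.
have n2 : (0 < 2 * n)%N by rewrite muln_gt0.
have [u pu] := C_prim_root_exists n2.
have [j wj] := prim_rootP pu w2n.
rewrite wj prim_root_exp_coprime //.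
apply: contraT => ncop.
set g := gcdn j (2 * n).
have g1 : (1 < g)%N.
  rewrite ltn_neqAle eq_sym ncop /= gcdn_gt0 n2 orbT //.
have pp := pdiv_prime g1.
set p := pdiv g in pp.
have pg : (p %| g)%N by apply: pdiv_dvd.
have pj : (p %| j)%N by apply: dvdn_trans pg (dvdn_gcdl _ _).
have p2n : (p %| 2 * n)%N by apply: dvdn_trans pg (dvdn_gcdr _ _).
have N1 : (-1 : algC) != 1 by rewrite -subr_eq0 -opprD -(natrD _ 1 1) oppr_eq0 pnatr_eq0.
case: (even_prime pp) => [p2 | op].
  move: pj; rewrite p2 => /dvdnP [j' jE].
  move: wn; rewrite wj -exprM jE -mulnA mulnC exprM (prim_expr_order pu) expr1n => e.
  by exfalso; move/eqP: N1; apply; exact: esym e.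
have pn : (p %| n)%N.
  move: p2n; rewrite Euclid_dvdM // => /orP[h|//].
  have := dvdn_leq (isT : (0 < 2)%N) h; have := odd_prime_gt2 op pp.
  by move=> a b; move: (leq_ltn_trans b a); rewrite ltnn.
set m := (n %/ p)%N.
have nmp : n = (m * p)%N by rewrite divnK.
have wm2 : w ^+ (2 * m) = 1.
  move: pj => /dvdnP [j' jE].
  rewrite wj -exprM.
  have -> : (j * (2 * m) = 2 * n * j')%N by rewrite jE nmp; lia.
  rewrite exprM.
  by rewrite (prim_expr_order pu) expr1n.
have wm : w ^+ m = -1.
  have : (w ^+ m) ^+ 2 == 1 by rewrite -exprM mulnC wm2.
  rewrite sqrf_eq1 => /orP[/eqP h|/eqP //].
  by move: wn; rewrite nmp exprM h expr1n => e; exfalso; move/eqP: N1; apply; exact: esym e.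
exfalso; exact: (@contra_step n m p w n0 nmp pp op erefl wm).
Qed.

Lemma prod_decomp (R : comNzRingType) a b (f : nat -> R) :
  \prod_(0 <= j < a * b) f j = \prod_(0 <= k < b) \prod_(0 <= r < a) f (r + a * k)%N.
Proof.
elim: b => [|b IH]; first by rewrite muln0 !big_geq.
rewrite big_nat_recr //= -IH mulnSr (@big_cat_nat _ _ _ (a * b)) //=; last by lia.
congr (_ * _).
rewrite -{1}(add0n (a * b)%N) big_addn.
have -> : (a * b + a - a * b = a)%N by lia.
by apply: eq_bigr => i _; rewrite addnC.
Qed.

Lemma prod_roots {w y : algC} {q : nat} : q.-primitive_root w -> y != 0 ->
  \prod_(0 <= k < q) (1 - y * w ^+ k) = 1 - y ^+ q.
Proof.
move=> pw y0.
have := congr1 (fun p : {poly algC} => p.[y^-1]) (factor_Xn_sub_1 pw).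
rewrite /= horner_prod hornerD hornerN hornerXn hornerC.
under eq_bigr do rewrite hornerXsubC.
move=> e.
have -> : \prod_(0 <= k < q) (1 - y * w ^+ k) = \prod_(0 <= k < q) (y * (y^-1 - w ^+ k)).
  by apply: eq_bigr => i _; rewrite mulrBr mulfV.
by rewrite big_split /= e prodr_const_nat subn0 mulrBr -exprMn mulfV // expr1n mulr1.
Qed.

Lemma core (z : algC) q m (B : pred nat) :
  (0 < q)%N -> (1 < m)%N ->
  (q * m).-primitive_root z ->
  (forall j, B j = B (j %% m)%N) -> (forall t, B (q * t)%N = B t) -> B 0%N = false ->
  \prod_(0 <= j < q * m | B j && ~~ (q %| j)%N) (1 - z ^+ j) = 1.
Proof.
move=> q0 m1 pz Bm Bq B0.
have m0 : (0 < m)%N by apply: ltnW.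
set G := \prod_(0 <= t < m) (if B t then 1 - z ^+ (q * t) else 1).
have X1 : \prod_(0 <= j < q * m | B j) (1 - z ^+ j) = G.
  rewrite big_mkcond /= mulnC prod_decomp exchange_big_nat /=.
  apply: eq_bigr => b _ /=.
  have Bb : forall k, B (b + m * k)%N = B b.
    by move=> k; rewrite Bm addnC mulnC modnMDl -Bm.
  under eq_bigr do rewrite Bb.
  case: (B b); last by rewrite big1.
  have pw : q.-primitive_root (z ^+ m).
    have := exp_prim_root pz m.
    by rewrite gcdnMl mulnK.
  have zb : z ^+ b != 0 by rewrite expf_neq0 // (prim_root_eq0 pz) muln_eq0 negb_or -!lt0n q0 m0.
  rewrite mulnC exprM -(prod_roots pw zb).
  by apply: eq_bigr => k _; rewrite exprD exprM.
have X2 : \prod_(0 <= j < q * m | B j && (q %| j)%N) (1 - z ^+ j) = G.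
  rewrite big_mkcond /= prod_decomp.
  apply: eq_bigr => t _ /=.
  rewrite big_ltn // add0n Bq dvdn_mulr // andbT big_nat_cond big1 ?mulr1 //.
  move=> r /andP[/andP[r1 rq] _]; rewrite addnC dvdn_addr ?dvdn_mulr //.
  have -> : (q %| r)%N = false.
    by apply/negP => h; move: (dvdn_leq r1 h); rewrite leqNgt rq.
  by rewrite andbF.
have G0 : G != 0.
  rewrite /G prodf_seq_neq0; apply/allP => t; rewrite mem_index_iota => /andP[_ tm].
  case Bt: (B t); last exact: oner_neq0.
  rewrite subr_eq0 eq_sym -(prim_order_dvd pz) dvdn_pmul2l //.
  apply/negP => h; move: Bt; case: (posnP t) => [->|tpos]; first by rewrite B0.
  by move: (dvdn_leq tpos h); rewrite leqNgt tm.
move: X1; rewrite (bigID (fun j => q %| j)%N) /= X2 mulrC => /eqP.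
by rewrite -{2}(mul1r G) (inj_eq (mulIf G0)) => /eqP.
Qed.

Lemma pp_prod (z : algC) n : n.-primitive_root z ->
  \prod_(1 <= j < n) (1 - z ^+ j) = n%:R.
Proof.
move=> pz; have n0 := prim_order_gt0 pz.
have := factor_Xn_sub_1 pz; rewrite big_ltn // expr0 subrX1 => e.
have nz : ('X - (1 : algC)%:P) != 0 by rewrite polyXsubC_eq0.
rewrite polyC1 in nz; rewrite polyC1 in e.
have e2 := mulfI nz e.
have := congr1 (fun p : {poly algC} => p.[1]) e2.
rewrite /= horner_prod horner_sum.
under eq_bigr do rewrite hornerXsubC.
move=> ->.
under eq_bigr do rewrite hornerXn expr1n.
by rewrite sumr_const card_ord.
Qed.


Lemma zeta_prim n : (0 < n)%N -> n.-primitive_root (zeta n).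
Proof.
move=> n0; rewrite /zeta.
have := exp_prim_root (@rootN1_prim n n0) 2.
by rewrite gcdnMr mulKn.
Qed.

Lemma uPhi_eval n :
  (uPhi n).[1] = \prod_(1 <= j < n.+1 | ugcd j n == 1%N) (1 - zeta n ^+ j).
Proof. by rewrite /uPhi horner_prod; apply: eq_bigr => j _; rewrite hornerXsubC. Qed.

Lemma shift_prod (C : pred nat) (F : nat -> algC) n : (0 < n)%N -> C 0%N = false -> C n = false ->
  \prod_(1 <= j < n.+1 | C j) F j = \prod_(0 <= j < n | C j) F j.
Proof.
move=> n0 C0 Cn.
rewrite big_mkcond big_nat_recr //= Cn mulr1 [RHS]big_mkcond [RHS]big_ltn //= C0 mul1r.
by rewrite -big_mkcond.
Qed.

Theorem lemma4p1 (n : nat) (n_gt0 : (0 < n)%N) :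
  (n = 1%N -> (uPhi n).[1] = 0) /\
  (forall p e : nat, prime p -> (0 < e)%N -> n = (p ^ e)%N ->
     (uPhi n).[1] = (p ^ e)%:R) /\
  (n <> 1%N -> ~ (exists p e : nat, [/\ prime p, (0 < e)%N & n = (p ^ e)%N]) ->
     (uPhi n).[1] = 1).
Proof.
split.
  move=> ->; rewrite uPhi_eval big_ltn_cond // big_geq // ugcd_1 mulr1 expr1.
  by rewrite /zeta root1C expr2 mulrNN mulr1 subrr.
split.
  move=> p e pp e0 nE.
  have pe1 : (1 < p ^ e)%N by rewrite -(expn0 p) ltn_exp2l ?prime_gt1.
  have Cj : forall j, (ugcd j n == 1%N) = ~~ (n %| j)%N.
    move=> j; have := ugcd_split p e 1 j pp e0 (negbT (Euclid_dvd1 pp)) (isT : (0 < 1)%N).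
    by rewrite muln1 ugcd_1 andbT -nE.
  rewrite uPhi_eval (eq_bigl _ _ Cj) -nE.
  rewrite big_mkcond big_nat_recr //= dvdnn mulr1.
  rewrite -(@pp_prod (zeta n) n (@zeta_prim n n_gt0)).
  apply: eq_big_nat => j /andP[j1 jn].
  have -> : (n %| j)%N = false.
    by apply/negP => h; move: (dvdn_leq j1 h); rewrite leqNgt jn.
  by [].
move=> n1 npp.
have n1' : (1 < n)%N by rewrite ltn_neqAle eq_sym n_gt0 andbT; apply/eqP.
have pp := pdiv_prime n1'.
set p := pdiv n in pp.
set a := logn p n.
have a0 : (0 < a)%N by rewrite logn_gt0 mem_primes pp n_gt0 pdiv_dvd.
set q := (p ^ a)%N.
have qn : (q %| n)%N by apply: pfactor_dvdnn.
set m := (n %/ q)%N.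
have nE : n = (q * m)%N by rewrite mulnC divnK.
have q0 : (0 < q)%N by rewrite expn_gt0 prime_gt0.
have m0 : (0 < m)%N by move: n_gt0; rewrite nE muln_gt0 => /andP[].
have pm : ~~ (p %| m)%N.
  apply/negP => h.
  have : (p ^ a.+1 %| n)%N.
    by rewrite nE expnSr dvdn_pmul2l.
  by rewrite pfactor_dvdn // ltnn.
have m1 : (1 < m)%N.
  rewrite ltn_neqAle eq_sym m0 andbT; apply/eqP => e1.
  by apply: npp; exists p, a; split => //; rewrite nE e1 muln1.
pose B j := ugcd j m == 1%N.
have Cj : forall j, (ugcd j n == 1%N) = B j && ~~ (q %| j)%N.
  by move=> j; rewrite {1}nE ugcd_split // andbC.
rewrite uPhi_eval (eq_bigl _ _ Cj) shift_prod //; last first.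
  - by rewrite qn andbF.
  - by rewrite dvdn0 andbF.
have pz : (q * m).-primitive_root (zeta n) by rewrite -nE; apply: zeta_prim.
have := @core (zeta n) q m B q0 m1 pz (fun j => ugcd_mod m j m0) (fun t => ugcd_mulq p a m t pp pm m0)
  (ugcd_div m 0 m1 (dvdn0 m)).
by rewrite -nE.
Qed.
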